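(* Let $\mathcal M$ be a finite metric space, let $C$ be any hierarchical clustering of $\mathcal M$, let the edges of a minimum spanning tree of $\mathcal M$ have weights $w_0\ge w_1\ge\cdots$ (all positive), and let $W=\sum_i w_i$. Then the sum over all clusters of $C$ of the minimum spanning tree length of the cluster is at least $\sum_i \tfrac12 w_i\bigl(1+\log_2(W/w_i)\bigr)$.
   Context: A hierarchical clustering of a finite point set $P$ is a family of nonempty subsets of $P$ (clusters) containing $P$ and all singletons, any two of which are disjoint or nested, maximal with this property (equivalently a rooted binary tree with leaves the points). The minimum spanning tree length of a cluster is the weight of a minimum spanning tree on its points under the metric. *)

(* Defs.v *)
From HB Require Import structures.
From mathcomp Require Import all_boot all_order all_algebra.
From mathcomp Require Import all_classical all_reals all_analysis.
Set Implicit Arguments. Unset Strict Implicit. Unset Printing Implicit Defensive.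
Import Order.TTheory GRing.Theory Num.Theory.
Local Open Scope ring_scope.


Section Defs.
Variable R : realType.

Definition is_metric (T : finType) (d : T -> T -> R) : Prop :=
  (forall x y, d x y = 0 <-> x = y) /\
  (forall x y, d x y = d y x) /\
  (forall x y z, d x z <= d x y + d y z).

Definition laminar (T : finType) (C : {set {set T}}) : Prop :=
  forall A B, A \in C -> B \in C ->
    [disjoint A & B]%B \/ A \subset B \/ B \subset A.

Definition laminar_nonempty (T : finType) (C : {set {set T}}) : Prop :=
  (forall A, A \in C -> A != @finset.set0 T) /\ laminar C.

Definition hierarchical_clustering (T : finType) (C : {set {set T}}) : Prop :=
  [set: T] \in C /\
  (forall x : T, [set x] \in C) /\
  laminar_nonempty C /\
  (forall C' : {set {set T}}, laminar_nonempty C' -> C \subset C' -> C' = C).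

(* spanning tree on the vertex set S: a set E of edges (stored as ordered
   pairs) between distinct points of S, with #|S| - 1 edges, connecting S.
   (Connected + #|S|-1 edges forces it to be a tree, each undirected edge
   appearing once.) *)
Definition spanning_tree (T : finType) (S : {set T}) (E : {set T * T}) : Prop :=
  (forall e, e \in E -> [/\ e.1 \in S, e.2 \in S & e.1 != e.2]) /\
  #|E| = (#|S| - 1)%N /\
  (forall x y, x \in S -> y \in S ->
     connect (fun u v => ((u, v) \in E) || ((v, u) \in E)) x y).

Definition tree_weight (T : finType) (d : T -> T -> R) (E : {set T * T}) : R :=
  \sum_(e in E) d e.1 e.2.

Definition is_mst (T : finType) (d : T -> T -> R) (S : {set T}) (E : {set T * T}) : Prop :=
  spanning_tree S E /\
  forall E', spanning_tree S E' -> tree_weight d E <= tree_weight d E'.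

Definition mst_len (T : finType) (d : T -> T -> R) (S : {set T}) : R :=
  inf [set w | exists E, spanning_tree S E /\ w = tree_weight d E]%classic.

Definition log2 (x : R) : R := ln x / ln 2.

End Defs.

(* Main.v *)
Require Import Defs.
From HB Require Import structures.
From mathcomp Require Import all_boot all_order all_algebra.
From mathcomp Require Import all_classical all_reals all_analysis.
From mathcomp Require Import zify ring lra.
Set Implicit Arguments. Unset Strict Implicit. Unset Printing Implicit Defensive.
Import Order.TTheory GRing.Theory Num.Theory.

Section Graph.
Variable T : finType.
Implicit Types (E F G B H : {set T * T}).
Local Open Scope nat_scope.

Definition erel E : rel T := fun u v => ((u, v) \in E) || ((v, u) \in E).

Lemma erel_sym E : symmetric (erel E).
Proof. by move=> u v; rewrite /erel orbC. Qed.

Lemma econn_sym E : connect_sym (erel E).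
Proof. exact: sym_connect_sym (erel_sym E). Qed.

Definition comp E x := [set y | connect (erel E) x y].
Definition kappa E := #|comp E @: [set: T]|.

Lemma comp_eq E x y : connect (erel E) x y -> comp E x = comp E y.
Proof.
move=> cxy; apply/setP=> z; rewrite !inE; apply/idP/idP => h.
- by apply: connect_trans h; rewrite econn_sym.
- exact: connect_trans cxy h.
Qed.

Lemma comp_self E x : x \in comp E x.
Proof. by rewrite inE connect0. Qed.

Lemma in_comp E x y : (y \in comp E x) = (comp E x == comp E y).
Proof.
apply/idP/eqP => [|h]; first by rewrite inE => /comp_eq.
by rewrite h comp_self.
Qed.

Lemma comp_conn E p q w : connect (erel E) p q -> (p \in comp E w) = (q \in comp E w).
Proof.
move=> cpq; rewrite !inE; apply/idP/idP => h; first exact: connect_trans h cpq.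
by apply: connect_trans h _; rewrite econn_sym.
Qed.

Lemma card_coarse (f g : T -> {set T}) :
  (forall x y, f x = f y -> g x = g y) -> #|g @: [set: T]| <= #|f @: [set: T]|.
Proof.
move=> fg.
pose h c := if [pick x | f x == c] is Some x then g x else c.
have -> : g @: [set: T] = h @: (f @: [set: T]).
  apply/setP=> c; apply/imsetP/imsetP => [[x _ ->]|[c' /imsetP[x _ ->] ->]].
  - exists (f x); first by apply: imset_f.
    rewrite /h; case: pickP => [y /eqP/fg -> //|/(_ x)]; by rewrite eqxx.
  - rewrite /h; case: pickP => [y /eqP/fg ->|/(_ x)]; last by rewrite eqxx.
    by exists x.
exact: leq_imset_card.
Qed.

Lemma conn_sub E E' : E \subset E' -> subrel (connect (erel E)) (connect (erel E')).
Proof.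
move=> sEE'; apply: connect_sub => u v /orP[] h; apply: connect1;
  by rewrite /erel (fintype.subsetP sEE' _ h) ?orbT.
Qed.

Lemma kappa_coarse E E' :
  subrel (connect (erel E)) (connect (erel E')) -> kappa E' <= kappa E.
Proof.
move=> s; apply: card_coarse => x y exy.
apply: comp_eq; apply: s.
have : y \in comp E x by rewrite exy comp_self.
by rewrite inE.
Qed.

Lemma kappa_sub E E' : E \subset E' -> kappa E' <= kappa E.
Proof. by move=> s; apply: kappa_coarse; apply: conn_sub. Qed.

Lemma comp0 x : comp finset.set0 x = [set x].
Proof.
apply/setP=> y; rewrite !inE; apply/idP/idP => [/connectP[p]|/eqP->]; last exact: connect0.
case: p => [_ -> //|z p] /=; case/andP; by rewrite /erel !inE.
Qed.

Lemma kappa0 : kappa finset.set0 = #|T|.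
Proof.
rewrite /kappa.
have -> : comp finset.set0 @: [set: T] = (fun x => [set x]) @: [set: T].
  by apply: eq_imset; exact: comp0.
rewrite card_imset ?cardsT //; exact: set1_inj.
Qed.

Lemma erelU1 u v E p q :
  erel ((u, v) |: E) p q = ((p == u) && (q == v)) || ((q == u) && (p == v)) || erel E p q.
Proof.
rewrite /erel !inE !xpair_eqE.
by case: (p == u); case: (q == v); case: (q == u); case: (p == v);
   case: ((p, q) \in E); case: ((q, p) \in E).
Qed.

Lemma conn_addl u v E x y : connect (erel E) x y -> connect (erel ((u, v) |: E)) x y.
Proof. by apply: conn_sub; apply: finset.subsetUr. Qed.

Lemma conn_uv u v E : connect (erel ((u, v) |: E)) u v.
Proof. by apply: connect1; rewrite erelU1 !eqxx. Qed.

Lemma comp_add u v E x :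
  comp ((u, v) |: E) x = if (x \in comp E u) || (x \in comp E v)
                         then comp E u :|: comp E v else comp E x.
Proof.
set E' := (u, v) |: E.
have closedE (a : {set T}) :
    (forall p q, connect (erel E) p q -> (p \in a) = (q \in a)) ->
    (u \in a) = (v \in a) -> closed_mem (erel E') (mem a).
  move=> hE huv p q; rewrite erelU1.
  case/orP => [/orP[/andP[/eqP-> /eqP->] | /andP[/eqP-> /eqP->]] //|].
  by move/connect1; apply: hE.
have toU z : (z \in comp E u) || (z \in comp E v) -> connect (erel E') z u.
  case/orP => h.
    by rewrite econn_sym; apply: conn_addl; move: h; rewrite inE.
  apply: connect_trans (_ : connect (erel E') z v) _.
    by apply: conn_addl; rewrite econn_sym; move: h; rewrite inE.
  by rewrite econn_sym conn_uv.
apply/setP=> y; rewrite [in LHS]inE.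
case: ifP => hx.
- apply/idP/idP => [cxy|hy].
  have cl : closed_mem (erel E') (mem (comp E u :|: comp E v)).
    apply: closedE => [p q cpq|]; first by rewrite !finset.in_setU !(comp_conn _ cpq).
    by rewrite !finset.in_setU !comp_self orbT.
  by rewrite -(closed_connect cl cxy) inE.
  apply: connect_trans (toU _ hx) _.
  by rewrite econn_sym; apply: toU; rewrite inE in hy.
- apply/idP/idP => [cxy|]; last by rewrite inE; apply: conn_addl.
  have cl : closed_mem (erel E') (mem (comp E x)).
    apply: closedE => [p q cpq|]; first by rewrite (comp_conn _ cpq).
    move: hx; rewrite !in_comp !(eq_sym (comp E x)).
    by case: (_ == _); case: (_ == _).
  by rewrite -(closed_connect cl cxy) comp_self.
Qed.

Section Add.
Variables (u v : T) (E : {set T * T}).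
Let cu := comp E u.
Let cv := comp E v.
Let Cs := comp E @: [set: T].
Let h (c : {set T}) := if (c == cu) || (c == cv) then cu :|: cv else c.

Lemma kappa_add_eq : kappa ((u, v) |: E) = #|h @: Cs|.
Proof.
rewrite /kappa /Cs -imset_comp.
have -> : comp ((u, v) |: E) @: [set: T] = (h \o comp E) @: [set: T].
  apply: eq_imset => x /=.
  by rewrite comp_add /h !in_comp !(eq_sym (comp E x)).
by [].
Qed.

Lemma cuCs : cu \in Cs. Proof. exact: imset_f. Qed.
Lemma cvCs : cv \in Cs. Proof. exact: imset_f. Qed.

Lemma kappa_add1 : kappa E <= (kappa ((u, v) |: E)).+1.
Proof.
rewrite kappa_add_eq /kappa -/Cs.
have inj : {in Cs :\ cu &, injective h}.
  have key c : c \in Cs -> c != cu -> c == cu :|: cv -> False.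
    case/imsetP => z _ -> ne /eqP eqU.
    have : u \in comp E z by rewrite eqU inE comp_self.
    by rewrite in_comp => /eqP eq; move: ne; rewrite eq eqxx.
  move=> c1 c2; rewrite !inE => /andP[n1 i1] /andP[n2 i2]; rewrite /h.
  rewrite (negPf n1) (negPf n2) /=.
  case: eqP => [e1|_]; case: eqP => [e2|_] //.
  - by move=> _; rewrite e1 e2.
  - by move=> e; exfalso; apply: (key c2) => //; rewrite -e.
  - by move=> e; exfalso; apply: (key c1) => //; rewrite e.
rewrite (cardsD1 cu) cuCs -(card_in_imset inj) add1n ltnS.
by apply: subset_leq_card; apply: imsetS; apply: subsetDl.
Qed.

Lemma kappa_add_lt : ~~ connect (erel E) u v -> kappa ((u, v) |: E) < kappa E.
Proof.
move=> nc; have ne : cu != cv.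
  apply: contra nc => /eqP e; have : v \in cu by rewrite e comp_self.
  by rewrite inE.
rewrite kappa_add_eq /kappa -/Cs.
have -> : h @: Cs = h @: (Cs :\ cu).
  apply/eqP; rewrite finset.eqEsubset; apply/andP; split; last by apply: imsetS; apply: subsetDl.
  apply/fintype.subsetP => c /imsetP[c' c'in ->].
  case: (c' =P cu) => [->|n]; last by apply: imset_f; rewrite !inE c'in andbT; apply/eqP.
  have -> : h cu = h cv by rewrite /h !eqxx orbT.
  by apply: imset_f; rewrite !inE cvCs andbT eq_sym.
rewrite [#|Cs|](cardsD1 cu) cuCs add1n ltnS; exact: leq_imset_card.
Qed.

End Add.

Lemma kappa_card E : #|T| <= kappa E + #|E|.
Proof.
move Hn: #|E| => n; elim: n E Hn => [|n IH] E hn.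
  by move/eqP: hn; rewrite cards_eq0 => /eqP ->; rewrite kappa0 addn0.
case: (set_0Vmem E) => [E0|[[u v] uvE]]; first by rewrite E0 cards0 in hn.
have h1 := IH (E :\ (u, v)).
rewrite (cardsD1 (u, v) E) uvE /= in hn.
have := kappa_add1 u v (E :\ (u, v)); rewrite finset.setD1K //.
have h2 : #|E :\ (u, v)| = n by move: hn; rewrite add1n; case.
 have := h1 h2; lia.
Qed.

Lemma kappa_addB E B : kappa E <= kappa (E :|: B) + #|B|.
Proof.
move Hn: #|B| => n; elim: n B Hn => [|n IH] B hn.
  by move/eqP: hn; rewrite cards_eq0 => /eqP ->; rewrite finset.setU0 addn0.
case: (set_0Vmem B) => [B0|[[u v] uvB]]; first by rewrite B0 cards0 in hn.
have h1 := IH (B :\ (u, v)).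
rewrite (cardsD1 (u, v) B) uvB /= in hn.
have := kappa_add1 u v (E :|: B :\ (u, v)).
have -> : (u, v) |: (E :|: B :\ (u, v)) = E :|: B.
  by rewrite finset.setUCA finset.setD1K.
have h2 : #|B :\ (u, v)| = n by move: hn; rewrite add1n; case.
have := h1 h2; lia.
Qed.

Lemma kappa_indep H B :
  (forall f, f \in B -> ~~ connect (erel (H :|: (B :\ f))) f.1 f.2) ->
  kappa (H :|: B) + #|B| <= kappa H.
Proof.
move Hn: #|B| => n; elim: n B Hn => [|n IH] B hn hyp.
  by move/eqP: hn; rewrite cards_eq0 => /eqP ->; rewrite finset.setU0 addn0.
case: (set_0Vmem B) => [B0|[[u v] uvB]]; first by rewrite B0 cards0 in hn.
have hyp' : forall f, f \in B :\ (u, v) ->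
    ~~ connect (erel (H :|: (B :\ (u, v) :\ f))) f.1 f.2.
  move=> f; rewrite inE => /andP[_ fB]; apply: contra (hyp f fB).
  apply: conn_sub; apply: finset.setUS; apply/fintype.subsetP => z; rewrite !inE.
  by case/andP => -> /andP[_ ->].
rewrite (cardsD1 (u, v) B) uvB /= in hn.
have h2 : #|B :\ (u, v)| = n by move: hn; rewrite add1n; case.
have h1 := IH _ h2 hyp'.
have := kappa_add_lt (hyp _ uvB).
rewrite /= finset.setUCA finset.setD1K //. move=> h3; rewrite addnS; apply: leq_trans h1; by rewrite ltn_add2r.
Qed.

End Graph.

Section ST.
Variable T : finType.
Implicit Types (E F G B H : {set T * T}) (A : {set T}).
Local Open Scope nat_scope.

Lemma st_kappa A F : spanning_tree A F -> A != finset.set0 -> kappa F + #|F| <= #|T|.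
Proof.
case=> [_ [cF conF]] An0.
case/set0Pn: An0 => a0 a0A.
have h1 : #|comp F @: A| <= 1.
  rewrite -(cards1 (comp F a0)); apply: subset_leq_card.
  apply/fintype.subsetP => c /imsetP[a aA ->]; rewrite inE; apply/eqP.
  by apply: comp_eq; apply: conF.
have h2 : #|comp F @: (~: A)| <= #|~: A| by apply: leq_imset_card.
have h3 := cardsC A.
have h4 : #|comp F @: [set: T]| <= #|comp F @: A| + #|comp F @: (~: A)|.
  by rewrite -(finset.setUCr A) imsetU -cardsUI leq_addr.
have h5 : 0 < #|A| by rewrite card_gt0; apply/set0Pn; exists a0.
rewrite /kappa; lia.
Qed.

Lemma st_sub_kappa A F E : spanning_tree A F -> A != finset.set0 -> E \subset F ->
  kappa E + #|E| <= #|T|.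
Proof.
move=> st An0 sEF.
have h1 := kappa_addB E (F :\: E).
have eF : E :|: (F :\: E) = F.
  by apply/setP=> z; rewrite !inE; case: (boolP (z \in E)) => // /(fintype.subsetP sEF) ->.
rewrite eF in h1.
have h2 := st_kappa st An0.
have h3 : #|F :\: E| + #|E| = #|F|.
  by rewrite cardsD (finset.setIidPr sEF) subnK // subset_leq_card.
lia.
Qed.

End ST.

Section Match.
Variables (R : realDomainType) (K : finType) (w : K -> R).
Local Open Scope ring_scope.

Lemma exists_max (S : {set K}) : S != finset.set0 ->
  exists2 x, x \in S & forall y, y \in S -> w y <= w x.
Proof.
case/set0Pn => x0 x0S.
case: (@arg_maxP _ _ K x0 (mem S) w x0S) => x xS xmax.
by exists x => // y yS; apply: xmax.
Qed.

Lemma match_thr n (G F : {set K}) : #|G| = n -> #|F| = n ->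
  (forall t, leq #|[set x in G | w x <= t]| #|[set x in F | w x <= t]|) ->
  exists s : K -> K, {in G &, injective s} /\
    (forall x, x \in G -> s x \in F /\ w (s x) <= w x).
Proof.
elim: n G F => [|n IH] G F hG hF thr.
  exists id; split; first by move=> x y.
  by move=> x; move/eqP: hG; rewrite cards_eq0 => /eqP ->; rewrite inE.
have Gn0 : G != finset.set0 by rewrite -card_gt0 hG.
have Fn0 : F != finset.set0 by rewrite -card_gt0 hF.
case: (exists_max Gn0) => g gG gmax.
case: (exists_max Fn0) => f fF fmax.
have fg : w f <= w g.
  rewrite leNgt; apply/negP => gf.
  have := thr (w g).
  have -> : [set x in G | w x <= w g] = G.
    by apply/setP => x; rewrite inE; case: (boolP (x \in G)) => // /gmax ->.
  have : [set x in F | w x <= w g] \subset F :\ f.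
    apply/fintype.subsetP => x; rewrite !inE => /andP[xF xw]; rewrite xF andbT.
    by apply/eqP => exf; move: xw; rewrite exf leNgt gf.
  move/subset_leq_card => h1; rewrite hG => h2.
  have h3 := cardsD1 f F; rewrite fF /= in h3; lia.
have [s [sinj smap]] : exists s : K -> K, {in G :\ g &, injective s} /\
    (forall x, x \in G :\ g -> s x \in F :\ f /\ w (s x) <= w x).
  apply: IH.
  - by move: hG; rewrite (cardsD1 g G) gG add1n => -[].
  - by move: hF; rewrite (cardsD1 f F) fF add1n => -[].
  move=> t; case: (boolP (w f <= t)) => ft.
    have e1 : #|[set x in F :\ f | w x <= t]| = n.
      have -> : [set x in F :\ f | w x <= t] = F :\ f.
        apply/setP => x; rewrite !inE; case: (x != f) => //=.
        case: (boolP (x \in F)) => //= /fmax xf; by rewrite (le_trans xf ft).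
      by move: hF; rewrite (cardsD1 f F) fF add1n => -[].
    rewrite e1.
    have : (#|G :\ g| = n)%N by move: hG; rewrite (cardsD1 g G) gG add1n => -[].
    move=> <-; apply: subset_leq_card; apply/fintype.subsetP => x; rewrite inE.
    by case/andP.
  rewrite -ltNge in ft.
  have l1 : leq #|[set x in G :\ g | w x <= t]| #|[set x in G | w x <= t]|.
    apply: subset_leq_card; apply/fintype.subsetP => x; rewrite !inE.
    by case/andP => /andP[_ ->] ->.
  have l2 : leq #|[set x in F | w x <= t]| #|[set x in F :\ f | w x <= t]|.
    apply: subset_leq_card; apply/fintype.subsetP => x; rewrite !inE.
    case/andP => -> xt; rewrite xt !andbT; apply/eqP => exf.
    by move: xt; rewrite exf leNgt ft.
  exact: leq_trans l1 (leq_trans (thr t) l2).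
exists (fun x => if x == g then f else s x); split.
  move=> x y xG yG /=.
  case: (eqVneq x g) => [->|xg]; case: (eqVneq y g) => [->|yg] //.
  - move=> efs; have : s y \in F :\ f by case: (smap y); rewrite // !inE yg.
    by rewrite -efs !inE eqxx.
  - move=> efs; have : s x \in F :\ f by case: (smap x); rewrite // !inE xg.
    by rewrite efs !inE eqxx.
  - by apply: sinj; rewrite !inE ?xg ?yg.
move=> x xG; case: (eqVneq x g) => [->|xg]; first by split.
have [h1 h2] : s x \in F :\ f /\ w (s x) <= w x by apply: smap; rewrite !inE xg.
by split => //; move: h1; rewrite inE => /andP[].
Qed.

End Match.

Section MST.
Variables (R : realType) (T : finType) (d : T -> T -> R).
Implicit Types (E F G B H : {set T * T}) (A : {set T}).
Local Notation w e := (d e.1 e.2).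

Lemma mst_cut A F u v t : is_mst d A F -> u \in A -> v \in A -> (d u v <= t)%R ->
  connect (erel [set f in F | w f <= t]%R) u v.
Proof.
move=> [stF minF] uA vA uvt.
case: (eqVneq u v) => [->|neq]; first exact: connect0.
apply/negPn/negP => nc.
set Ft := [set f in F | w f <= t]%R.
set B := F :\: Ft.
set H0 := (u, v) |: Ft.
have stF' := stF; case: stF' => [eF [cF conF]].
have gF : (u, v) \notin F.
  apply/negP => uvF; move/negP: nc; apply; apply: connect1.
  by rewrite /erel !inE uvF uvt.
have An0 : A != finset.set0 by apply/set0Pn; exists u.
have [f fB cf] : exists2 f, f \in B & connect (erel (H0 :|: (B :\ f))) f.1 f.2.
  case: (boolP [exists f in B, connect (erel (H0 :|: (B :\ f))) f.1 f.2]).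
    by case/existsP => f /andP[fB cf]; exists f.
  move=> nex.
  have hyp : forall f, f \in B -> ~~ connect (erel (H0 :|: (B :\ f))) f.1 f.2.
    move=> f fB; apply/negP => cf; move/negP: nex; apply.
    by apply/existsP; exists f; rewrite fB.
  have k1 := kappa_indep hyp.
  have eHB : H0 :|: B = (u, v) |: F.
    apply/setP => z; rewrite !inE.
    by case: (z == (u, v)); case: (z \in F); case: (w z <= t)%R.
  rewrite eHB in k1.
  have k2 := kappa_add_lt nc.
  have k3 : (kappa Ft + #|Ft| <= #|T|)%N.
    apply: (st_sub_kappa stF An0); apply/fintype.subsetP => z; rewrite inE; by case/andP.
  have k4 := kappa_card F.
  have k5 : (kappa F <= kappa ((u, v) |: F))%N.
    apply: kappa_coarse; apply: connect_sub => p q.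
    rewrite erelU1 => /orP[/orP[/andP[/eqP-> /eqP->]|/andP[/eqP-> /eqP->]]|h].
    - exact: conF.
    - exact: conF.
    - exact: connect1.
  have k6 : (#|B| + #|Ft| = #|F|)%N.
    rewrite cardsD.
    have -> : F :&: Ft = Ft.
      by apply/finset.setIidPr/fintype.subsetP => z; rewrite inE; case/andP.
    rewrite subnK //; apply: subset_leq_card; apply/fintype.subsetP => z; rewrite inE.
    by case/andP.
  exfalso; rewrite -/Ft -/H0 in k2.
  lia.
move: fB; rewrite inE => /andP[fnFt fF].
have wf : (t < w f)%R by move: fnFt; rewrite inE fF /= -ltNge.
set F' := (u, v) |: (F :\ f).
have sub : H0 :|: (B :\ f) \subset F'.
  apply/fintype.subsetP => z; rewrite !inE.
  case/orP => [/orP[->//|/andP[zF zt]]|/andP[zf /andP[_ zF]]].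
    rewrite zF andbT; apply/orP; right; apply/eqP => ezf.
    by move: zt; rewrite ezf leNgt wf.
  by rewrite zf zF orbT.
have cf' := conn_sub sub cf.
have stF'' : spanning_tree A F'.
  split; [|split].
  - move=> z; rewrite !inE => /orP[/eqP->|/andP[_ zF]] /=; last exact: eF.
    by split.
  - rewrite cardsU1 !inE negb_and gF orbT /=.
    have := cardsD1 f F; rewrite fF /= => <-; exact: cF.
  - move=> x y xA yA; apply: connect_sub (conF x y xA yA) => p q /orP[] h.
    + case: (eqVneq (p, q) f) => [epq|npq].
        by rewrite -epq in cf'.
      by apply: connect1; rewrite /erel !inE npq h orbT.
    + rewrite econn_sym.
      case: (eqVneq (q, p) f) => [epq|npq].
        by rewrite -epq in cf'.
      by apply: connect1; rewrite /erel !inE npq h orbT.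
have := minF _ stF''.
rewrite /tree_weight (big_setD1 f fF) big_setU1 /=; last first.
  by rewrite !inE negb_and gF orbT.
rewrite lerD2r => wfuv.
by move: wf; rewrite ltNge (le_trans wfuv uvt).
Qed.

Lemma mst_thr A F G t : is_mst d A F -> spanning_tree A G ->
  (#|[set g in G | w g <= t]%R| <= #|[set f in F | w f <= t]%R|)%N.
Proof.
move=> mF stG.
case: (eqVneq A finset.set0) => [A0|An0].
  suff -> : [set g in G | w g <= t]%R = finset.set0 by rewrite cards0.
  apply/setP => z; rewrite !inE; case: (boolP (z \in G)) => // /(proj1 stG).
  by case; rewrite A0 inE.
set Gt := [set g in G | w g <= t]%R.
set Ft := [set f in F | w f <= t]%R.
have k1 : (kappa Gt + #|Gt| <= #|T|)%N.
  apply: (st_sub_kappa stG An0); apply/fintype.subsetP => z; rewrite inE; by case/andP.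
have k2 := kappa_card Ft.
have k3 : (kappa Ft <= kappa Gt)%N.
  apply: kappa_coarse; apply: connect_sub => p q /orP[] h.
  - move: h; rewrite inE => /andP[hG ht].
    have [pA qA _] := proj1 stG _ hG.
    exact: (mst_cut mF pA qA ht).
  - move: h; rewrite inE => /andP[hG ht].
    have [qA pA _] := proj1 stG _ hG.
    rewrite econn_sym; exact: (mst_cut mF qA pA ht).
lia.
Qed.

End MST.

Local Open Scope ring_scope.

Section Analytic.
Variable R : realType.

Lemma ln_le_sub1 (x : R) : 0 < x -> ln x <= x - 1.
Proof.
move=> x0; have h := @le_ln1Dx R (x - 1) ltac:(lra).
have e : 1 + (x - 1) = x by ring.
by rewrite e in h.
Qed.

Lemma lnB_le (p q : R) : 0 < p -> 0 < q -> ln p - ln q <= p / q - 1.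
Proof.
move=> p0 q0; rewrite -ln_div ?posrE //; apply: ln_le_sub1; exact: divr_gt0.
Qed.

Lemma ln2_gt0 : 0 < ln (2 : R).
Proof. by apply: ln_gt0; lra. Qed.

Lemma ln4 : ln (4 : R) = 2 * ln 2.
Proof.
have e : (4:R) = 2 * 2 by ring.
by rewrite e lnM ?posrE ?ltr0n //; ring.
Qed.

Lemma entropy_term (b W k : R) : 0 <= b -> 0 < W -> 0 < k ->
  b * (ln W - ln b) <= b * ln k + W / k - b.
Proof.
move=> b0 W0 k0; case: (eqVneq b 0) => [->|bn0].
  rewrite !mul0r subr0 add0r; exact: ltW (divr_gt0 W0 k0).
have bp : 0 < b by rewrite lt_def bn0 b0.
have h := lnB_le W0 (mulr_gt0 bp k0).
rewrite lnM ?posrE // in h.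
have := ler_wpM2l b0 h.
have -> : b * (W / (b * k) - 1) = W / k - b by field; apply/andP; split; apply/lt0r_neq0.
move=> h2; lra.
Qed.

Lemma entropy3 (a b c : R) : 0 < a -> 0 <= b -> 0 <= c ->
  a * (ln (a + b + c) - ln a) + b * (ln (a + b + c) - ln b) + c * (ln (a + b + c) - ln c)
  <= (a + 2 * b + 2 * c) * ln 2.
Proof.
move=> a0 b0 c0; set W := a + b + c.
have W0 : 0 < W by rewrite /W; lra.
have two : (0:R) < 2 by lra.
have four : (0:R) < 4 by lra.
have ha := entropy_term (ltW a0) W0 two.
have hb := entropy_term b0 W0 four.
have hc := entropy_term c0 W0 four.
rewrite ln4 in hb hc.
have e : W / 2 + W / 4 + W / 4 = a + b + c by rewrite /W; field.
lra.
Qed.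

End Analytic.

Section Phi.
Variable R : realType.

Definition Phi (K : finType) (u : K -> R) (S : {set K}) : R :=
  \sum_(x in S) (2^-1 * u x * (1 + log2 ((\sum_(y in S) u y) / u x))).

Lemma sum_ge_term (K : finType) (u : K -> R) (S : {set K}) x : x \in S ->
  (forall y, y \in S -> 0 <= u y) -> u x <= \sum_(y in S) u y.
Proof.
move=> xS h; rewrite (bigD1 x) //= lerDl sumr_ge0 // => y /andP[yS _]; exact: h.
Qed.

Lemma Phi_ln (K : finType) (u : K -> R) (S : {set K}) :
  (forall x, x \in S -> 0 < u x) ->
  Phi u S = 2^-1 * (\sum_(y in S) u y) +
            (\sum_(x in S) u x * (ln (\sum_(y in S) u y) - ln (u x))) / (2 * ln 2).
Proof.
move=> hu; rewrite /Phi; set U := \sum_(y in S) u y.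
have l2 : ln (2:R) != 0 by apply/lt0r_neq0; exact: ln2_gt0.
have e : forall x, x \in S -> 2^-1 * u x * (1 + log2 (U / u x)) =
    2^-1 * u x + u x * (ln U - ln (u x)) / (2 * ln 2).
  move=> x xS; have ux := hu x xS.
  have U0 : 0 < U.
    apply: lt_le_trans ux _; apply: sum_ge_term => // y yS; exact: ltW (hu y yS).
  rewrite /log2 ln_div ?posrE //; field; exact: l2.
rewrite (eq_bigr _ e) big_split /= -mulr_sumr -mulr_suml //.
Qed.

Lemma Phi_mono (K : finType) (u v : K -> R) (S : {set K}) :
  (forall x, x \in S -> 0 < u x /\ u x <= v x) -> Phi u S <= Phi v S.
Proof.
move=> huv.
case: (set_0Vmem S) => [->|[x0 x0S]]; first by rewrite /Phi !big_set0.
have up : forall x, x \in S -> 0 < u x by move=> x /huv[].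
have vp : forall x, x \in S -> 0 < v x.
  by move=> x /huv[h1 h2]; apply: lt_le_trans h1 h2.
rewrite (Phi_ln up) (Phi_ln vp).
set U := \sum_(y in S) u y; set V := \sum_(y in S) v y.
have uV : forall x, x \in S -> u x <= U.
  by move=> x xS; apply: sum_ge_term => // y yS; exact: ltW (up y yS).
have vV : forall x, x \in S -> v x <= V.
  by move=> x xS; apply: sum_ge_term => // y yS; exact: ltW (vp y yS).
have U0 : 0 < U by apply: lt_le_trans (up _ x0S) (uV _ x0S).
have V0 : 0 < V by apply: lt_le_trans (vp _ x0S) (vV _ x0S).
have UV : U <= V by apply: ler_sum => x xS; case: (huv x xS).
have Q1 : \sum_(x in S) u x * (ln U - ln (u x)) <=
          \sum_(x in S) u x * (ln V - ln (v x)).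
  have z : \sum_(x in S) (U * v x / V - u x) = 0.
    rewrite sumrB -mulr_suml -mulr_sumr -/V -/U; field; exact: lt0r_neq0.
  apply: le_trans (_ : _ <= \sum_(x in S) (u x * (ln V - ln (v x)) + (U * v x / V - u x))) _.
    apply: ler_sum => x xS.
    have ux := up x xS; have vx := vp x xS.
    have h := lnB_le (mulr_gt0 U0 vx) (mulr_gt0 ux V0).
    rewrite !lnM ?posrE // in h.
    have := ler_wpM2l (ltW ux) h.
    have -> : u x * (U * v x / (u x * V) - 1) = U * v x / V - u x.
      by field; apply/andP; split; apply: lt0r_neq0.
    move=> h2; lra.
  by rewrite big_split /= z addr0.
have Q2 : \sum_(x in S) u x * (ln V - ln (v x)) <=
          \sum_(x in S) v x * (ln V - ln (v x)).
  apply: ler_sum => x xS; apply: ler_wpM2r; last by case: (huv x xS).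
  by rewrite subr_ge0 ler_ln ?posrE //; [exact: vV | exact: vp].
have l2 : 0 < ln (2:R) by exact: ln2_gt0.
apply: lerD; first by apply: ler_wpM2l => //; lra.
apply: ler_wpM2r; first by rewrite invr_ge0; lra.
exact: le_trans Q1 Q2.
Qed.

Lemma Phi_imset (K : finType) (u : K -> R) (s : K -> K) (X : {set K}) :
  {in X &, injective s} -> Phi u (s @: X) = Phi (fun x => u (s x)) X.
Proof.
move=> sinj; rewrite /Phi.
have -> : \sum_(y in s @: X) u y = \sum_(y in X) u (s y) by rewrite big_imset.
by rewrite big_imset.
Qed.

Lemma Phi_split (K : finType) (u : K -> R) (z : K) (X Y : {set K}) :
  (forall x, x \in z |: (X :|: Y) -> 0 < u x) -> z \notin X :|: Y -> [disjoint X & Y] ->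
  Phi u (z |: (X :|: Y)) <= \sum_(x in z |: (X :|: Y)) u x + Phi u X + Phi u Y.
Proof.
move=> hu zXY dXY.
have uX : forall x, x \in X -> 0 < u x by move=> x xX; apply: hu; rewrite !inE xX orbT.
have uY : forall x, x \in Y -> 0 < u x by move=> x xY; apply: hu; rewrite !inE xY !orbT.
have uz : 0 < u z by apply: hu; rewrite !inE eqxx.
rewrite (Phi_ln hu) (Phi_ln uX) (Phi_ln uY).
have sF : forall g : K -> R, \sum_(x in z |: (X :|: Y)) g x =
    g z + \sum_(x in X) g x + \sum_(x in Y) g x.
  move=> g; rewrite big_setU1 //= -addrA; congr (_ + _).
  rewrite -bigU //; apply: eq_bigl => x; by rewrite !inE.
set a := u z; set b := \sum_(y in X) u y; set c := \sum_(y in Y) u y.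
have eW : \sum_(y in z |: (X :|: Y)) u y = a + b + c by rewrite sF.
rewrite eW sF.
have b0 : 0 <= b by apply: sumr_ge0 => x xX; exact: ltW (uX x xX).
have c0 : 0 <= c by apply: sumr_ge0 => x xY; exact: ltW (uY x xY).
set W := a + b + c.
have sX : forall (T : {set K}) (bb : R), bb = \sum_(y in T) u y ->
    \sum_(x in T) u x * (ln W - ln (u x)) =
    \sum_(x in T) u x * (ln bb - ln (u x)) + bb * (ln W - ln bb).
  move=> T bb ->; rewrite mulr_suml -big_split /=; apply: eq_bigr => x _; ring.
rewrite (sX X b) // (sX Y c) //.
set QX := \sum_(x in X) u x * (ln b - ln (u x)).
set QY := \sum_(x in Y) u x * (ln c - ln (u x)).
set q := a * (ln W - ln a) + b * (ln W - ln b) + c * (ln W - ln c).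
have l2 : 0 < ln (2:R) by exact: ln2_gt0.
have hq : q / (2 * ln 2) <= (a + 2 * b + 2 * c) / 2.
  have p2 : 0 < 2 * ln (2:R) by lra.
  rewrite ler_pdivrMr //.
  have -> : (a + 2 * b + 2 * c) / 2 * (2 * ln 2) = (a + 2 * b + 2 * c) * ln 2.
    by field.
  exact: entropy3.
have -> : (a * (ln W - ln a) + (QX + b * (ln W - ln b)) + (QY + c * (ln W - ln c))) / (2 * ln 2)
        = q / (2 * ln 2) + QX / (2 * ln 2) + QY / (2 * ln 2).
  rewrite /q; field; apply/lt0r_neq0; exact: l2.
rewrite /W; lra.
Qed.

End Phi.

Section Main.
Variables (R : realType) (T : finType) (d : T -> T -> R) (hd : is_metric d).
Local Notation w e := (d e.1 e.2).
Implicit Types (A B : {set T}) (E F G : {set T * T}).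

Lemma arith1 (a b : nat) : (0 < a)%N -> (0 < b)%N ->
  (1 + (a - 1 + (b - 1)) = a + b - 1)%N.
Proof. move=> ha hb; lia. Qed.

Lemma d_ge0 x y : 0 <= d x y.
Proof.
case: hd => [h0 [hs ht]]; have := ht x y x.
rewrite (proj2 (h0 x x) erefl) [d y x]hs; lra.
Qed.

Lemma d_gt0 x y : x != y -> 0 < d x y.
Proof.
move=> nxy; rewrite lt_def d_ge0 andbT; apply/eqP => h.
by move/eqP: nxy; apply; apply: (proj1 (proj1 hd x y)).
Qed.

Lemma st_pos A F e : spanning_tree A F -> e \in F -> 0 < w e.
Proof. by case=> eF _ /eF [_ _ ne]; exact: d_gt0. Qed.

Lemma tw_ge0 (F : {set T * T}) : 0 <= tree_weight d F.
Proof. by apply: sumr_ge0 => e _; exact: d_ge0. Qed.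

Lemma star_st A a : a \in A -> spanning_tree A [set (a, x) | x in A :\ a].
Proof.
move=> aA; split; [|split].
- move=> e /imsetP[x]; rewrite !inE => /andP[xa xA] -> /=; split => //.
  by rewrite eq_sym.
- rewrite card_imset; last by move=> x y e; case: e.
  by rewrite (cardsD1 a A) aA add1n subn1.
- have toa z : z \in A -> connect (erel [set (a, x) | x in A :\ a]) z a.
    move=> zA; case: (eqVneq z a) => [->|za]; first exact: connect0.
    apply: connect1; rewrite /erel; apply/orP; right.
    by apply: imset_f; rewrite !inE za.
  move=> x y xA yA; change (connect (erel [set (a, x) | x in A :\ a]) x y).
  apply: connect_trans (toa x xA) _; rewrite econn_sym; exact: toa.
Qed.

Lemma mst_exists A : A != finset.set0 -> exists F, is_mst d A F.
Proof.
case/set0Pn => a aA; have st := star_st aA.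
pose P : {pred {set T * T}} := fun E => `[< spanning_tree A E >].
have P0 : P [set (a, x) | x in A :\ a] by apply/asboolP.
case: (@arg_minP _ _ _ _ P (tree_weight d) P0) => F PF Fmin.
exists F; split; first by apply/asboolP.
by move=> E' stE'; apply: Fmin; apply/asboolP.
Qed.

Lemma mst_len_eq A F : is_mst d A F -> mst_len d A = tree_weight d F.
Proof.
move=> [stF minF]; rewrite /mst_len.
pose S := [set r | exists E, spanning_tree A E /\ r = tree_weight d E]%classic.
have FS : S (tree_weight d F) by exists F.
have lbF : forall y, S y -> tree_weight d F <= y by move=> y [E [stE ->]]; exact: minF.
have hl : has_lbound S by exists (tree_weight d F); exact: lbF.
change (inf S = tree_weight d F).
apply/eqP; rewrite eq_le; apply/andP; split; first exact: (ge_inf hl FS).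
apply: lb_le_inf; first by exists (tree_weight d F).
exact: lbF.
Qed.

Lemma mst_match A F G : is_mst d A F -> spanning_tree A G ->
  exists s : T * T -> T * T, {in G &, injective s} /\
    (forall x, x \in G -> s x \in F /\ w (s x) <= w x).
Proof.
move=> mF stG.
apply: (@match_thr R _ (fun e => d e.1 e.2) #|G| G F).
- by [].
- by rewrite (proj1 (proj2 (proj1 mF))) (proj1 (proj2 stG)).
- move=> t; apply: mst_thr; [exact: mF | exact: stG].
Qed.

Variables (C : {set {set T}}) (hC : hierarchical_clustering C).

Lemma clus_n0 B : B \in C -> B != finset.set0.
Proof. by case: hC => _ [_ [[ne _] _]]; exact: ne. Qed.

Lemma mst_len_ge0 B : B \in C -> 0 <= mst_len d B.
Proof.
move=> BC; have [F mF] := mst_exists (clus_n0 BC).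
by rewrite (mst_len_eq mF); exact: tw_ge0.
Qed.

Lemma max_in (P : {set {set T}}) (B0 : {set T}) : B0 \in P ->
  exists2 B, B \in P & forall B', B' \in P -> (#|B'| <= #|B|)%N.
Proof.
move=> B0P; have Pn0 : P != finset.set0 by apply/set0Pn; exists B0.
case: (@exists_max R _ (fun B => (#|B|)%:R) P Pn0) => B BP Bmax.
by exists B => // B' /Bmax; rewrite ler_nat.
Qed.

Lemma cluster_split A : A \in C -> (1 < #|A|)%N ->
  exists A1 A2, [/\ A1 \in C, A2 \in C, A1 != finset.set0 & A2 != finset.set0] /\
    [/\ [disjoint A1 & A2], A1 :|: A2 = A, (#|A1| < #|A|)%N & (#|A2| < #|A|)%N].
Proof.
move=> AC A1gt.
case: hC => [TC [sC [[neC lamC] maxC]]].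
have [x xA] : exists x, x \in A.
  by apply/set0Pn; rewrite -card_gt0; lia.
have propx : [set x] \proper A by rewrite properEcard finset.sub1set xA cards1.
pose P1 := [set B in C | (x \in B) && (B \proper A)].
have xP1 : [set x] \in P1 by rewrite !inE sC eqxx propx.
case: (max_in xP1) => A1 A1P A1max.
move: A1P; rewrite inE => /andP[A1C /andP[xA1 A1A]].
have A1mx : forall B, B \in C -> x \in B -> B \proper A -> A1 \subset B -> B = A1.
  move=> B BC xB BA sAB; apply/eqP; rewrite eq_sym eqEcard sAB /=.
  by apply: A1max; rewrite inE BC xB BA.
case/properP: (A1A) => sA1A [y yA yA1].
have propy : [set y] \proper A.
  by rewrite properEcard finset.sub1set yA cards1.
pose P2 := [set B in C | (y \in B) && (B \proper A)].
have yP2 : [set y] \in P2 by rewrite !inE sC eqxx propy.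
case: (max_in yP2) => A2 A2P A2max.
move: A2P; rewrite inE => /andP[A2C /andP[yA2 A2A]].
have A2mx : forall B, B \in C -> y \in B -> B \proper A -> A2 \subset B -> B = A2.
  move=> B BC yB BA sAB; apply/eqP; rewrite eq_sym eqEcard sAB /=.
  by apply: A2max; rewrite inE BC yB BA.
have sA2A := proper_sub A2A.
have dis : [disjoint A1 & A2].
  case: (lamC _ _ A1C A2C) => [//|[s12|s21]].
  - have e := A1mx A2 A2C (fintype.subsetP s12 x xA1) A2A s12.
    by move: yA1; rewrite -e yA2.
  - by move: yA1; rewrite (fintype.subsetP s21 y yA2).
set U := A1 :|: A2.
have sUA : U \subset A by rewrite finset.subUset sA1A sA2A.
have xU : x \in U by rewrite /U inE xA1.
have yU : y \in U by rewrite /U inE yA2 orbT.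
have UA : U = A.
  apply/eqP; apply/negPn/negP => nUA.
  have UpA : U \proper A by rewrite finset.properEneq nUA sUA.
  have lamU : forall B, B \in C -> [disjoint B & U] \/ B \subset U \/ U \subset B.
    move=> B BC; rewrite /U.
    case: (lamC B A BC AC) => [dBA|[sBA|sAB]].
    - by left; exact: disjointWr sUA dBA.
    - case: (lamC B A1 BC A1C) => [d1|[s1|s1]].
      + case: (lamC B A2 BC A2C) => [d2|[s2|s2]].
        * by left; rewrite -setI_eq0 finset.setIUr (disjoint_setI0 d1) (disjoint_setI0 d2) finset.setU0 eqxx.
        * by right; left; apply: fintype.subset_trans s2 (finset.subsetUr _ _).
        * case: (eqVneq B A) => [->|nBA]; first by right; right; exact: sUA.
          have pBA : B \proper A by rewrite finset.properEneq nBA sBA.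
          have e := A2mx B BC (fintype.subsetP s2 y yA2) pBA s2.
          by right; left; rewrite e finset.subsetUr.
      + by right; left; apply: fintype.subset_trans s1 (finset.subsetUl _ _).
      + case: (eqVneq B A) => [->|nBA]; first by right; right; exact: sUA.
        have pBA : B \proper A by rewrite finset.properEneq nBA sBA.
        have e := A1mx B BC (fintype.subsetP s1 x xA1) pBA s1.
        by right; left; rewrite e finset.subsetUl.
    - by right; right; apply: fintype.subset_trans sUA sAB.
  have lnU : laminar_nonempty (U |: C).
    split.
    - move=> B; rewrite in_setU1 => /orP[/eqP->|BC]; last exact: neC.
      by apply/set0Pn; exists x.
    - move=> B B'; rewrite !in_setU1 => /orP[/eqP->|BC] /orP[/eqP->|B'C].
      + by right; left; exact: fintype.subxx.
      + case: (lamU B' B'C) => [h|[h|h]].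
        * by left; rewrite disjoint_sym.
        * by right; right.
        * by right; left.
      + exact: lamU.
      + exact: lamC.
  have e := maxC _ lnU (finset.subsetUr [set U] C).
  have UC : U \in C by rewrite -e setU11.
  have := A1mx U UC xU UpA (finset.subsetUl A1 A2).
  by move=> eU; move: yA1; rewrite -eU yU.
have cA : #|A| = (#|A1| + #|A2|)%N.
  by rewrite -UA /U cardsU (disjoint_setI0 dis) cards0 subn0.
have c1 : (0 < #|A1|)%N by rewrite card_gt0; apply/set0Pn; exists x.
have c2 : (0 < #|A2|)%N by rewrite card_gt0; apply/set0Pn; exists y.
exists A1, A2; split; first by split => //; rewrite -card_gt0.
split.
- exact: dis.
- exact: UA.
- have h : (#|A1| + 0 < #|A1| + #|A2|)%N by rewrite ltn_add2l.
  by rewrite cA; rewrite addn0 in h.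
- have h : (0 + #|A2| < #|A1| + #|A2|)%N by rewrite ltn_add2r.
  by rewrite cA; rewrite add0n in h.
Qed.

Definition cost (A : {set T}) := \sum_(B in C | B \subset A) mst_len d B.

Lemma sub_disj (X A1 A2 : {set T}) : X \subset A1 -> X \subset A2 ->
  [disjoint A1 & A2] -> X = finset.set0.
Proof.
move=> s1 s2 dis; apply/eqP; rewrite -finset.subset0 -(disjoint_setI0 dis) finset.subsetI s1 s2.
by [].
Qed.

Lemma cost_split A A1 A2 : A \in C -> A1 != finset.set0 -> A2 != finset.set0 ->
  [disjoint A1 & A2] -> A1 \subset A -> A2 \subset A ->
  mst_len d A + cost A1 + cost A2 <= cost A.
Proof.
move=> AC n1 n2 dis sA1A sA2A.
rewrite /cost !big_mkcondr /=.
have eA : mst_len d A = \sum_(B in C) (if B == A then mst_len d B else 0).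
  rewrite (bigD1 A) //= eqxx big1 ?addr0 // => B /andP[_ /negbTE ->] //.
rewrite eA -!big_split /=; apply: ler_sum => B BC.
have f0 := mst_len_ge0 BC.
have Bn0 := clus_n0 BC.
case: (boolP (B \subset A1)) => s1.
  have s2 : ~~ (B \subset A2).
    by apply/negP => s2; move: Bn0; rewrite (sub_disj s1 s2 dis) eqxx.
  have nBA : B != A.
    apply/eqP => eBA.
    have sAA1 : A \subset A1 by rewrite -eBA.
    have e0 := sub_disj (fintype.subset_trans sA2A sAA1) (fintype.subxx _) dis.
    by move: n2; rewrite e0 eqxx.
  by rewrite (negbTE nBA) (negbTE s2) (fintype.subset_trans s1 sA1A) add0r addr0.
case: (boolP (B \subset A2)) => s2.
  have nBA : B != A.
    apply/eqP => eBA.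
    have sAA2 : A \subset A2 by rewrite -eBA.
    have e0 := sub_disj (fintype.subxx _) (fintype.subset_trans sA1A sAA2) dis.
    by move: n1; rewrite e0 eqxx.
  by rewrite (negbTE nBA) (fintype.subset_trans s2 sA2A) !add0r.
rewrite !addr0; case: eqP => [->|_]; first by rewrite fintype.subxx.
by case: ifP.
Qed.

Lemma main_ind n : forall A F, A \in C -> (#|A| <= n)%N -> is_mst d A F ->
  Phi (fun e => d e.1 e.2) F <= cost A.
Proof.
elim: n => [|n IH] A F AC An mF.
  have h := clus_n0 AC; rewrite -card_gt0 in h.
  have h' := leq_trans h An; by rewrite ltnn in h'.
have cost0 : 0 <= cost A by apply: sumr_ge0 => B /andP[BC _]; exact: mst_len_ge0.
case: (leqP #|A| 1) => [A1|A2].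
  have : #|F| = 0%N by rewrite (proj1 (proj2 (proj1 mF))); apply/eqP; rewrite subn_eq0.
  by move/eqP; rewrite cards_eq0 => /eqP ->; rewrite /Phi big_set0.
case: (cluster_split AC A2) => A1 [A2' [[A1C A2C n1 n2] [dis eU c1 c2]]].
have [F1 m1] := mst_exists n1.
have [F2 m2] := mst_exists n2.
have l1 : (#|A1| <= n)%N by rewrite -ltnS (leq_trans c1 An).
have l2 : (#|A2'| <= n)%N by rewrite -ltnS (leq_trans c2 An).
have h1 := IH A1 F1 A1C l1 m1.
have h2 := IH A2' F2 A2C l2 m2.
have [a1 a1A1] : exists a1, a1 \in A1 by apply/set0Pn.
have [a2 a2A2] : exists a2, a2 \in A2' by apply/set0Pn.
have sA1A : A1 \subset A by rewrite -eU finset.subsetUl.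
have sA2A : A2' \subset A by rewrite -eU finset.subsetUr.
case: m1 => [[eF1 [cF1 conF1]] min1].
case: m2 => [[eF2 [cF2 conF2]] min2].
have a2nA1 : a2 \in A1 = false by rewrite disjoint_sym in dis; exact: (disjointFr dis a2A2).
have a1nA2 : a1 \in A2' = false by exact: (disjointFr dis a1A1).
set G := (a1, a2) |: (F1 :|: F2).
have F1G : F1 \subset G by apply/fintype.subsetP => e eF; rewrite /G !inE eF orbT.
have F2G : F2 \subset G by apply/fintype.subsetP => e eF; rewrite /G !inE eF !orbT.
have gnF : (a1, a2) \notin F1 :|: F2.
  rewrite inE negb_or; apply/andP; split; apply/negP.
  - by move/eF1 => [_ /= h _]; rewrite a2nA1 in h.
  - by move/eF2 => [/= h _ _]; rewrite a1nA2 in h.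
have F12 : F1 :&: F2 = finset.set0.
  apply/setP => e; rewrite !inE; apply/negbTE/negP => /andP[e1 e2].
  have [h1' _ _] := eF1 e e1; have [h2' _ _] := eF2 e e2.
  by rewrite (disjointFr dis h1') in h2'.
have stG : spanning_tree A G.
  split; [|split].
  - move=> e; rewrite /G !inE => /orP[/eqP->|/orP[eF|eF]] /=.
    + split; [exact: fintype.subsetP sA1A _ a1A1|exact: fintype.subsetP sA2A _ a2A2|].
      by apply/eqP => e12; rewrite e12 a2nA1 in a1A1.
    + by have [p q r] := eF1 e eF; split => //; apply: (fintype.subsetP sA1A).
    + by have [p q r] := eF2 e eF; split => //; apply: (fintype.subsetP sA2A).
  - have cA : #|A| = (#|A1| + #|A2'|)%N.
      by rewrite -eU cardsU (disjoint_setI0 dis) cards0 subn0.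
    have p1 : (0 < #|A1|)%N by rewrite card_gt0.
    have p2 : (0 < #|A2'|)%N by rewrite card_gt0.
    rewrite /G cardsU1 gnF cardsU F12 cards0 subn0 cF1 cF2 cA.
    exact: arith1.
  - have toa z : z \in A -> connect (erel G) z a1.
      rewrite -eU inE => /orP[zA1|zA2].
      + exact: (conn_sub F1G (conF1 z a1 zA1 a1A1)).
      + apply: connect_trans (conn_sub F2G (conF2 z a2 zA2 a2A2)) _.
        by apply: connect1; rewrite /erel /G !inE eqxx orbT.
    move=> x y xA yA; change (connect (erel G) x y).
    apply: connect_trans (toa x xA) _; rewrite econn_sym; exact: toa.
have [s [sinj smap]] := mst_match mF stG.
have sub : s @: G \subset F.
  by apply/fintype.subsetP => e /imsetP[x xG ->]; case: (smap x xG).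
have eF : s @: G = F.
  apply/eqP; rewrite eqEcard sub /= card_in_imset //.
  by rewrite (proj1 (proj2 (proj1 mF))) (proj1 (proj2 stG)).
have eG : s @: G = s (a1, a2) |: (s @: F1 :|: s @: F2) by rewrite /G imsetU1 imsetU.
have posF : forall e, e \in F -> 0 < w e by move=> e; apply: st_pos (proj1 mF).
have inj1 : {in F1 &, injective s}.
  by move=> x y xF yF; apply: sinj; [exact: fintype.subsetP F1G _ xF|exact: fintype.subsetP F1G _ yF].
have inj2 : {in F2 &, injective s}.
  by move=> x y xF yF; apply: sinj; [exact: fintype.subsetP F2G _ xF|exact: fintype.subsetP F2G _ yF].
have gG : (a1, a2) \in G by rewrite /G !inE eqxx.
have zn : s (a1, a2) \notin s @: F1 :|: s @: F2.
  rewrite inE negb_or; apply/andP; split; apply/negP => /imsetP[x xF ex].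
  - have := sinj _ _ gG (fintype.subsetP F1G _ xF) ex => exg.
    by move: gnF; rewrite inE exg xF.
  - have := sinj _ _ gG (fintype.subsetP F2G _ xF) ex => exg.
    by move: gnF; rewrite inE exg xF orbT.
have d12 : [disjoint s @: F1 & s @: F2].
  rewrite -setI_eq0; apply/eqP/setP => e; rewrite !inE; apply/negbTE/negP.
  case/andP => /imsetP[x xF1 ->] /imsetP[y yF2 exy].
  have := sinj _ _ (fintype.subsetP F1G _ xF1) (fintype.subsetP F2G _ yF2) exy => exy'.
  by move: F12 => /setP /(_ x); rewrite !inE xF1 exy' yF2.
have posU : forall x, x \in s (a1, a2) |: (s @: F1 :|: s @: F2) -> 0 < d x.1 x.2.
  by move=> x; rewrite -eG eF; exact: posF.
have hsplit := @Phi_split R _ (fun e => d e.1 e.2) (s (a1, a2)) (s @: F1) (s @: F2) posU zn d12.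
rewrite -eG eF in hsplit.
have mono1 : Phi (fun e => d e.1 e.2) (s @: F1) <= Phi (fun e => d e.1 e.2) F1.
  rewrite Phi_imset //; apply: Phi_mono => x xF.
  have [sxF sxw] := smap x (fintype.subsetP F1G _ xF); split => //; exact: posF.
have mono2 : Phi (fun e => d e.1 e.2) (s @: F2) <= Phi (fun e => d e.1 e.2) F2.
  rewrite Phi_imset //; apply: Phi_mono => x xF.
  have [sxF sxw] := smap x (fintype.subsetP F2G _ xF); split => //; exact: posF.
have cs := cost_split AC n1 n2 dis sA1A sA2A.
have ml := mst_len_eq mF.
apply: le_trans hsplit _; apply: le_trans _ cs; rewrite ml.
apply: lerD; first apply: lerD.
- exact: lexx.
- exact: le_trans mono1 h1.
- exact: le_trans mono2 h2.
Qed.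

End Main.

Theorem lemma7 (R : realType) (T : finType) (d : T -> T -> R)
  (hd : is_metric d) (C : {set {set T}}) (hC : hierarchical_clustering C)
  (E : {set T * T}) (hE : is_mst d [set: T] E) :
  \sum_(e in E) (2^-1 * d e.1 e.2 *
      (1 + log2 (tree_weight d E / d e.1 e.2)))
  <= \sum_(A in C) mst_len d A.
Proof.
have TC : [set: T] \in C by case: hC.
have -> : \sum_(A in C) mst_len d A = cost d C [set: T].
  by rewrite /cost; apply: eq_bigl => B; rewrite finset.subsetT andbT.
exact: (@main_ind R T d hd C hC #|[set: T]| [set: T] E TC (leqnn _) hE).
Qed.
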